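(* For an ordered forest $\mathcal F$ on $[n]$, let $f_{\mathcal F}:[n]\to[n]$ send each non-root vertex to its parent and each root to itself. Then $f_{\mathcal F\mathcal G}=f_{\mathcal F}\bullet f_{\mathcal G}$, the ideals of $f_{\mathcal F}$ are exactly the vertex sets $L_V$ of the subforests $\mathrm{Lea}_V\mathcal F$ for admissible cuts $V$, and the linear map $\mathbf H_o\to\mathbf{EFSym}$, $\mathcal F\mapsto\mathbf S^{f_{\mathcal F}}$, is an injective morphism of graded Hopf algebras. Its image is the span of the $\mathbf S^\phi$ with $\phi$ acyclic (i.e. having no cycle of length $\ge2$), which is therefore a Hopf subalgebra of $\mathbf{EFSym}$ isomorphic to $\mathbf H_o$.
   Context: An ordered forest on $n$ vertices is a rooted forest with vertex set $[n]$ (labels arbitrary), given by roots and parent map. Admissible cuts are antichains $V$ for the descendant relation; $L_V$ is the set of vertices in $V$ or descending from $V$; $\mathrm{Lea}_V\mathcal F$ and $\mathrm{Roo}_V\mathcal F$ are the induced subforests on $L_V$ and on its complement, relabelled increasingly. $\mathbf H_o$ has basis the ordered forests, product $\mathcal F\mathcal G$ = disjoint union with labels of $\mathcal G$ shifted, coproduct $\Delta\mathcal F=\sum_V\mathrm{Roo}_V\mathcal F\otimes\mathrm{Lea}_V\mathcal F$. $\mathbf{EFSym}$: over $A=\{a_{ij}:i\ne j\}$ with $a_{ij}\prec a_{kl}$ iff $j=k$, $\mathbf S^f$ ($f:[n]\to[n]$) is the sum of words $w_1\cdots w_n$ with $w_{f(j)}\prec w_j$ whenever $f(j)\ne j$;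 product $\mathbf S^f\mathbf S^g=\mathbf S^{f\bullet g}$ (shifted concatenation $i\mapsto f(i)$, $n+i\mapsto g(i)+n$); coproduct $\Delta\mathbf S^f=\sum_{I\models f}\mathbf S^{\mathrm{std}(f^{[n]\setminus I})}\otimes\mathbf S^{\mathrm{std}(f^I)}$, where $I\models f$ means $f^{-1}(I)\subseteq I$, $f^I(x)=f(x)$ if $f(x)\in I$ else $x$, and $\mathrm{std}$ conjugates by the increasing bijection onto $[|I|]$. *)

(* Defs.v *)
From mathcomp Require Import all_boot.
Set Implicit Arguments. Unset Strict Implicit. Unset Printing Implicit Defensive.

(* A raw "parent map" on vertex set [n] = 'I_n : None for roots,
   Some y for a non-root whose parent is y. *)
Definition pforest (n : nat) := {ffun 'I_n -> option 'I_n}.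

Definition upF n (p : pforest n) (o : option 'I_n) : option 'I_n := obind p o.

(* The parent map is that of a rooted forest: from every vertex, walking up
   at most n steps reaches beyond a root (i.e. no cycles). *)
Definition is_forest n (p : pforest n) : bool :=
  [forall x : 'I_n, iter n (upF p) (Some x) == None].

Definition desc n (p : pforest n) (x y : 'I_n) : bool :=
  [exists k : 'I_n, iter k.+1 (upF p) (Some x) == Some y].

Definition admissible n (p : pforest n) (V : {set 'I_n}) : bool :=
  [forall x in V, forall y in V, ~~ desc p x y].

Definition LV n (p : pforest n) (V : {set 'I_n}) : {set 'I_n} :=
  [set x | (x \in V) || [exists v in V, desc p x v]].

(* induced subforest on S, relabelled increasingly *)
Definition restrF n (p : pforest n) (S : {set 'I_n}) : pforest #|S| :=
  [ffun k : 'I_#|S| =>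
     match p (enum_val k) with
     | Some y => if y \in S then Some (enum_rank_in (enum_valP k) y) else None
     | None => None
     end].

Definition Roo n (p : pforest n) V := restrF p (~: LV p V).
Definition Lea n (p : pforest n) V := restrF p (LV p V).

Definition forest_prod n m (p : pforest n) (q : pforest m) : pforest (n + m) :=
  [ffun i => match split i with
             | inl a => omap (@lshift n m) (p a)
             | inr b => omap (@rshift n m) (q b)
             end].

Definition HF := {n : nat & pforest n}.

(* coproduct of H_o, as the multiset of basis tensors Roo_V F (x) Lea_V F *)
Definition coprodH n (p : pforest n) : seq (HF * HF) :=
  [seq (Tagged pforest (Roo p V), Tagged pforest (Lea p V))
  | V <- enum [set V : {set 'I_n} | admissible p V]].

Definition endo (n : nat) := {ffun 'I_n -> 'I_n}.
Definition EF := {n : nat & endo n}.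

Definition fbul n m (f : endo n) (g : endo m) : endo (n + m) :=
  [ffun i => match split i with
             | inl a => lshift m (f a)
             | inr b => rshift n (g b)
             end].

Definition ideal n (f : endo n) (I : {set 'I_n}) : bool :=
  [forall x, (f x \in I) ==> (x \in I)].

(* std(f^I) : f^I restricted to I and conjugated by the increasing
   bijection I -> [|I|]  ( f^I(x) = f(x) if f(x) \in I, else x ) *)
Definition stdres n (f : endo n) (I : {set 'I_n}) : endo #|I| :=
  [ffun k : 'I_#|I| =>
     let x := enum_val k in
     enum_rank_in (enum_valP k) (if f x \in I then f x else x)].

Definition coprodE n (f : endo n) : seq (EF * EF) :=
  [seq (Tagged endo (stdres f (~: J)), Tagged endo (stdres f J))
  | J <- enum [set J : {set 'I_n} | ideal f J]].

Definition acyclic n (f : endo n) : bool :=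
  ~~ [exists x : 'I_n, (f x != x) && [exists k : 'I_n, iter k.+1 f x == x]].

Definition fF n (p : pforest n) : endo n := [ffun x => odflt x (p x)].

Definition PhiB (F : HF) : EF := Tagged endo (fF (tagged F)).
Definition PhiT (t : HF * HF) : EF * EF := (PhiB t.1, PhiB t.2).

(* Main.v *)
Require Import Defs.
From mathcomp Require Import all_boot.
From mathcomp Require Import zify.
From Stdlib Require Import Classical.
Set Implicit Arguments. Unset Strict Implicit. Unset Printing Implicit Defensive.

Lemma split_lsh n m (a : 'I_n) : split (lshift m a) = inl a.
Proof. exact: (unsplitK (inl a)). Qed.
Lemma split_rsh n m (b : 'I_m) : split (rshift n b) = inr b.
Proof. exact: (unsplitK (inr b)). Qed.

Lemma part1 n m (p : pforest n) (q : pforest m) :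
  fF (forest_prod p q) = fbul (fF p) (fF q).
Proof.
apply/ffunP => i; rewrite !ffunE.
case: split_ordP => [a ->|b ->]; rewrite ffunE ?split_lsh ?split_rsh /=.
- by case: (p a).
- by case: (q b).
Qed.

Definition sacyclic (T : Type) (f : T -> T) :=
  forall x j, iter j.+1 f x = x -> f x = x.

Lemma iter_period (T : Type) (h : T -> T) x j t :
  iter j.+1 h x = x -> iter (j.+1 * t) h x = x.
Proof.
move=> H; elim: t => [|t IH]; first by rewrite muln0.
by rewrite mulnS iterD IH H.
Qed.

Lemma iter_fix (T : Type) (h : T -> T) z k : h z = z -> iter k h z = z.
Proof. by move=> H; elim: k => //= k ->. Qed.

Lemma cyc_nonfix (T : Type) (h : T -> T) x j :
  iter j.+1 h x = x -> h x <> x -> forall i, h (iter i h x) <> iter i h x.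
Proof.
move=> Hc Hx i Hi; apply: Hx.
have E : iter (j.+1 * i.+1) h x = iter i h x.
  have -> : j.+1 * i.+1 = (j.+1 * i.+1 - i) + i by lia.
  by rewrite iterD iter_fix.
by rewrite iter_period // in E; rewrite {1 2}E.
Qed.

Lemma sacyclic_sub (T : Type) (f h : T -> T) :
  (forall z, h z <> z -> h z = f z) -> sacyclic f -> sacyclic h.
Proof.
move=> Hhf Hf x j Hc; apply: NNPP => Hx.
have Hnf := cyc_nonfix Hc Hx.
have Hi : forall i, iter i h x = iter i f x.
  elim=> //= i IH; rewrite -IH; exact: Hhf (Hnf i).
have := Hf x j; rewrite -Hi => /(_ Hc) Hfx.
exact: Hx (etrans (Hhf x Hx) Hfx).
Qed.

Lemma iter_upF_None n (p : pforest n) k : iter k (upF p) None = None.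
Proof. by elim: k => //= k ->. Qed.

Lemma forest_sacyclic n (p : pforest n) : is_forest p -> sacyclic (fF p).
Proof.
move=> /forallP Hp x j Hc; apply: NNPP => Hx.
have Hnf := cyc_nonfix Hc Hx.
have Hi : forall i, iter i (upF p) (Some x) = Some (iter i (fF p) x).
  elim=> //= i ->; move: (Hnf i); rewrite /= ffunE.
  by case: (p _) => //= y _; rewrite ffunE; case: (p _) => //.
by move: (Hp x); rewrite Hi.
Qed.

Definition pOf n (f : endo n) : pforest n :=
  [ffun x => if f x == x then None else Some (f x)].

Lemma fF_pOf n (f : endo n) : fF (pOf f) = f.
Proof. by apply/ffunP => x; rewrite !ffunE; case: eqP. Qed.

Lemma sacyclic_acyclic n (f : endo n) : sacyclic f -> acyclic f.
Proof.
move=> Hs; apply/negP => /existsP [x /andP [Hx /existsP [k /eqP Hk]]].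
by move: Hx; rewrite (Hs x k Hk) eqxx.
Qed.

Lemma acyclic_forest n (f : endo n) : acyclic f -> is_forest (pOf f).
Proof.
move=> Ha; apply/forallP => x; apply/eqP; apply: NNPP => Hn.
have Hi : forall j, iter j (upF (pOf f)) (Some x) != None ->
   iter j (upF (pOf f)) (Some x) = Some (iter j f x) /\
   forall i, i < j -> f (iter i f x) != iter i f x.
  elim=> [|j IH] //= Hj.
  have Hj' : iter j (upF (pOf f)) (Some x) != None.
    by apply: contra Hj => /eqP ->.
  case: (IH Hj') => E Hl; move: Hj; rewrite E /= ffunE.
  case: ifP => // /negbT Hne _; split=> // i; rewrite ltnS leq_eqVlt.
  by case/orP => [/eqP ->|/Hl //].
have [_ Hl] := Hi n (introN eqP Hn).
have : ~~ injectiveb (fun j : 'I_n.+1 => iter j f x).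
  apply/injectiveP => /leq_card; rewrite !card_ord; lia.
case/injectivePn => i [j Hij Heq].
wlog lt_ij : i j Hij Heq / i < j.
  move=> W; case: (ltngtP i j) => H; first exact: W Hij Heq H.
    by apply: (W j i); rewrite // eq_sym.
  by move: Hij; rewrite (val_inj H) eqxx.
move/negP: Ha; apply; apply/existsP; exists (iter i f x).
rewrite Hl; last by have := ltn_ord j; lia.
have Hk : j - i - 1 < n by have := ltn_ord j; lia.
apply/existsP; exists (Ordinal Hk) => /=.
idtac.
rewrite -iterS (_ : (j - i - 1).+1 = j - i); last by lia.
by rewrite -iterD subnK ?Heq // ltnW.
Qed.

Lemma acyclicE n (f : endo n) : acyclic f <-> sacyclic f.
Proof.
split; last exact: sacyclic_acyclic.
by move/acyclic_forest/forest_sacyclic; rewrite fF_pOf.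
Qed.

Lemma iter_fbul_l n m (f : endo n) (g : endo m) k a :
  iter k (fbul f g) (lshift m a) = lshift m (iter k f a).
Proof. by elim: k => //= k ->; rewrite ffunE split_lsh. Qed.

Lemma iter_fbul_r n m (f : endo n) (g : endo m) k b :
  iter k (fbul f g) (rshift n b) = rshift n (iter k g b).
Proof. by elim: k => //= k ->; rewrite ffunE split_rsh. Qed.

Lemma part6 n m (f : endo n) (g : endo m) :
  acyclic f -> acyclic g -> acyclic (fbul f g).
Proof.
rewrite !acyclicE => Hf Hg x j; case: (split_ordP x) => [a ->|b ->].
- rewrite iter_fbul_l ffunE split_lsh => /lshift_inj Hc.
  by rewrite (Hf _ _ Hc).
- rewrite iter_fbul_r ffunE split_rsh => /rshift_inj Hc.
  by rewrite (Hg _ _ Hc).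
Qed.

Lemma stdres_val n (f : endo n) (I : {set 'I_n}) k :
  enum_val (stdres f I k) =
  (if f (enum_val k) \in I then f (enum_val k) else enum_val k).
Proof.
rewrite ffunE enum_rankK_in //; case: ifP => // _; exact: enum_valP.
Qed.

Lemma stdres_sacyclic n (f : endo n) (I : {set 'I_n}) :
  sacyclic f -> sacyclic (stdres f I).
Proof.
move=> Hf.
pose h x := if f x \in I then f x else x.
have Hh : sacyclic h.
  apply: (sacyclic_sub (f := f)) => // z; rewrite /h; by case: ifP.
have Hi : forall j k, enum_val (iter j (stdres f I) k) = iter j h (enum_val k).
  by move=> j k; elim: j => //= j <-; rewrite stdres_val.
move=> k j Hc; apply: enum_val_inj.
have := Hi j.+1 k; rewrite Hc => E.
by rewrite stdres_val -/(h _); apply: (Hh _ j); rewrite -E.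
Qed.

Lemma part7 n (f : endo n) : acyclic f ->
  all (fun t : EF * EF => acyclic (tagged t.1) && acyclic (tagged t.2)) (coprodE f).
Proof.
move=> /acyclicE Hf; apply/allP => t /mapP [J _ ->] /=.
by apply/andP; split; apply/acyclicE; apply: stdres_sacyclic.
Qed.

Lemma forest_noloop n (p : pforest n) x : is_forest p -> p x <> Some x.
Proof.
move=> /forallP /(_ x) H E; move: H.
by rewrite iter_fix.
Qed.

Lemma part4 n (p q : pforest n) : is_forest p -> is_forest q ->
  fF p = fF q -> p = q.
Proof.
move=> Hp Hq E; apply/ffunP => x.
have := congr1 (fun f : endo n => f x) E; rewrite /= !ffunE.
have := @forest_noloop _ p x Hp; have := @forest_noloop _ q x Hq.
by case: (p x) => [y|]; case: (q x) => [z|] //= H1 H2 H3; subst.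
Qed.

Lemma part5 n (phi : endo n) :
  acyclic phi <-> exists p : pforest n, is_forest p /\ fF p = phi.
Proof.
split.
- move=> Ha; exists (pOf phi); split; [exact: acyclic_forest | exact: fF_pOf].
- by case=> p [Hp <-]; apply/acyclicE; exact: forest_sacyclic.
Qed.

Lemma restr_fF n (p : pforest n) (S : {set 'I_n}) :
  fF (restrF p S) = stdres (fF p) S.
Proof.
have Hf : forall x, fF p x = odflt x (p x) by move=> x; rewrite ffunE.
apply/ffunP => k; rewrite /stdres /restrF !ffunE.
case E: (p (enum_val k)) => [y|] /=.
- by case: ifP => //= _; rewrite enum_valK_in.
- by rewrite (enum_valP k) enum_valK_in.
Qed.

Definition descU n (p : pforest n) x y :=
  exists j, iter j.+1 (upF p) (Some x) = Some y.

Lemma descE n (p : pforest n) x y : is_forest p -> desc p x y <-> descU p x y.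
Proof.
move=> /forallP Hp; split.
- by case/existsP => k /eqP H; exists k.
- case=> j H; apply/existsP.
  have Hj : j < n.
    rewrite ltnNge; apply/negP => Hle.
    move: H; rewrite (_ : j.+1 = (j.+1 - n) + n); last by lia.
    by rewrite iterD (eqP (Hp x)) iter_upF_None.
  by exists (Ordinal Hj); apply/eqP.
Qed.

Lemma descU_trans n (p : pforest n) x y z :
  descU p x y -> descU p y z -> descU p x z.
Proof.
case=> j Hj [k Hk]; exists (k + j.+1).
by rewrite -addSn iterD Hj.
Qed.

Lemma descU_step n (p : pforest n) x y : p x = Some y -> descU p x y.
Proof. by move=> H; exists 0. Qed.

Lemma descU_stepT n (p : pforest n) x y v :
  p x = Some y -> descU p y v -> descU p x v.
Proof. by move=> H Hd; apply: descU_trans Hd; apply: descU_step. Qed.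

Lemma up_ideal n (p : pforest n) (J : {set 'I_n}) i x w :
  ideal (fF p) J -> iter i (upF p) (Some x) = Some w -> w \in J -> x \in J.
Proof.
move=> /forallP HJ; elim: i x => [x [->] //|i IH x].
rewrite iterSr /=; case E: (p x) => [y|]; last by rewrite iter_upF_None.
move=> /IH H /H Hy; have := HJ x; rewrite ffunE E /= Hy; exact.
Qed.

Lemma inLV n (p : pforest n) V x : is_forest p ->
  x \in LV p V <-> (x \in V \/ exists2 v, v \in V & descU p x v).
Proof.
move=> Hp; rewrite inE; split.
- case/orP => [->|/existsP [v /andP [Hv /(descE _ _ Hp) Hd]]]; first by left.
  by right; exists v.
- case=> [->//|[v Hv Hd]]; apply/orP; right; apply/existsP; exists v.
  by rewrite Hv; apply/(descE _ _ Hp).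
Qed.

Lemma LV_ideal n (p : pforest n) V : is_forest p -> ideal (fF p) (LV p V).
Proof.
move=> Hp; apply/forallP => x; apply/implyP; rewrite ffunE.
case E: (p x) => [y|] //= /(inLV _ _ Hp) H; apply/(inLV _ _ Hp); right.
case: H => [Hy|[v Hv Hd]].
- by exists y => //; apply: descU_step.
- by exists v => //; apply: descU_stepT Hd.
Qed.

Lemma adm_no n (p : pforest n) V x y : is_forest p -> admissible p V ->
  x \in V -> y \in V -> descU p x y -> False.
Proof.
move=> Hp /forallP /(_ x) /implyP HV Hx Hy /(descE _ _ Hp) Hd.
by move: (HV Hx) => /forallP /(_ y) /implyP /(_ Hy); rewrite Hd.
Qed.

Definition Vmax n (p : pforest n) (J : {set 'I_n}) : {set 'I_n} :=
  [set x in J | if p x is Some y then y \notin J else true].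

Lemma Vmax_adm n (p : pforest n) J : is_forest p -> ideal (fF p) J ->
  admissible p (Vmax p J).
Proof.
move=> Hp HJ; apply/forallP => x; apply/implyP => Hx.
apply/forallP => y; apply/implyP => Hy; apply/negP => /(descE _ _ Hp) [j Hj].
move: Hx Hy; rewrite !inE => /andP [HxJ Hx] /andP [HyJ _].
move: Hj; rewrite iterSr /=; case E: (p x) Hx => [z|] Hz; last by rewrite iter_upF_None.
by move=> Hj; move: Hz; rewrite (up_ideal HJ Hj HyJ).
Qed.

Lemma Vmax_LV n (p : pforest n) J : is_forest p -> ideal (fF p) J ->
  LV p (Vmax p J) = J.
Proof.
move=> Hp HJ; apply/setP => x; apply/idP/idP.
- move/(inLV _ _ Hp) => [|[v Hv [j Hj]]]; first by rewrite inE => /andP [].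
  by move: Hv; rewrite inE => /andP [Hv _]; apply: up_ideal HJ Hj Hv.
- suff : forall m x, iter m (upF p) (Some x) = None -> x \in J ->
           x \in LV p (Vmax p J).
    by apply; apply/eqP; move/forallP: Hp; apply.
  elim => [//|m IH] y; rewrite iterSr /=; case E: (p y) => [z|] Hm HyJ.
  + case Hz: (z \in J).
    * have := IH z Hm Hz => /(inLV _ _ Hp) [Hzv|[v Hv Hd]]; apply/(inLV _ _ Hp); right.
      - by exists z => //; apply: descU_step.
      - by exists v => //; apply: descU_stepT Hd.
    * by apply/(inLV _ _ Hp); left; rewrite inE HyJ E Hz.
  + by apply/(inLV _ _ Hp); left; rewrite inE HyJ E.
Qed.

Lemma LV_sub n (p : pforest n) V W : is_forest p -> admissible p V ->
  admissible p W -> LV p V = LV p W -> {subset V <= W}.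
Proof.
move=> Hp HV HW E x Hx.
have : x \in LV p W by rewrite -E; apply/(inLV _ _ Hp); left.
case/(inLV _ _ Hp) => [//|[w Hw Hd]]; exfalso.
have : w \in LV p V by rewrite E; apply/(inLV _ _ Hp); left.
case/(inLV _ _ Hp) => [HwV|[v Hv Hd2]].
- exact: adm_no Hp HV Hx HwV Hd.
- exact: adm_no Hp HV Hx Hv (descU_trans Hd Hd2).
Qed.

Lemma part2 n (p : pforest n) : is_forest p ->
  [set J : {set 'I_n} | ideal (fF p) J]
  = [set LV p V | V in [set V : {set 'I_n} | admissible p V]].
Proof.
move=> Hp; apply/setP => J; rewrite inE; apply/idP/imsetP.
- move=> HJ; exists (Vmax p J); first by rewrite inE Vmax_adm.
  by rewrite Vmax_LV.
- by case=> V _ ->; apply: LV_ideal.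
Qed.

Lemma part3 n (p : pforest n) : is_forest p ->
  perm_eq (map PhiT (coprodH p)) (coprodE (fF p)).
Proof.
move=> Hp; rewrite /coprodH /coprodE -map_comp.
pose h (J : {set 'I_n}) := (Tagged endo (stdres (fF p) (~: J)),
                           Tagged endo (stdres (fF p) J)).
rewrite (_ : map _ (enum _) =
   map h (map (LV p) (enum [set V : {set 'I_n} | admissible p V]))); last first.
  rewrite -map_comp; apply: eq_map => V.
  by rewrite /= /PhiT /PhiB /= /Roo /Lea !restr_fF.
apply: perm_map; rewrite part2 //.
apply: uniq_perm; last first.
- move=> J; rewrite mem_enum; apply/mapP/imsetP.
  + by case=> V; rewrite mem_enum => HV ->; exists V.
  + by case=> V HV ->; exists V; rewrite ?mem_enum.
- exact: enum_uniq.
- rewrite map_inj_in_uniq ?enum_uniq // => V W; rewrite !mem_enum !inE => HV HW E.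
  by apply/setP; apply/subset_eqP/andP; split; apply/subsetP;
    [apply: (LV_sub Hp HV HW E) | apply: (LV_sub Hp HW HV (esym E))].
Qed.

Theorem mainTheorem13 :
  (* f_{FG} = f_F \bullet f_G *)
  (forall n m (p : pforest n) (q : pforest m),
      is_forest p -> is_forest q -> fF (forest_prod p q) = fbul (fF p) (fF q)) /\
  (* ideals of f_F are exactly the sets L_V, V admissible cut *)
  (forall n (p : pforest n), is_forest p ->
      [set J : {set 'I_n} | ideal (fF p) J]
      = [set LV p V | V in [set V : {set 'I_n} | admissible p V]]) /\
  (* compatibility with the coproducts (as multisets of basis tensors) *)
  (forall n (p : pforest n), is_forest p ->
      perm_eq (map PhiT (coprodH p)) (coprodE (fF p))) /\
  (* injectivity *)
  (forall n (p q : pforest n), is_forest p -> is_forest q ->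
      fF p = fF q -> p = q) /\
  (* the image is spanned by the S^phi, phi acyclic *)
  (forall n (phi : endo n),
      acyclic phi <-> exists p : pforest n, is_forest p /\ fF p = phi) /\
  (* that span is a Hopf subalgebra *)
  (forall n m (f : endo n) (g : endo m),
      acyclic f -> acyclic g -> acyclic (fbul f g)) /\
  (forall n (f : endo n), acyclic f ->
      all (fun t : EF * EF => acyclic (tagged t.1) && acyclic (tagged t.2))
          (coprodE f)).
Proof.
split; first by move=> n m p q _ _; exact: part1.
split; first exact: part2.
split; first exact: part3.
split; first exact: part4.
split; first exact: part5.
split; first exact: part6.
exact: part7.
Qed.
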